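(* Let $T_0 \in \mathcal{G}(X)$ be fixed. If $\mathcal{R}(Z) \cap \mathcal{G}_{T_0}$ is dense in $\mathcal{G}_{T_0}$, then $\mathcal{S}_{T_0}$ is a first category subset of $\mathcal{G}_{T_0}$.
   Context: Let $(X,m)$ and $(Y,\nu)$ both be the unit interval with Lebesgue measure, and $(Z,\mu) = (X\times Y, m\times\nu)$. For a probability space $W$, $\mathcal{G}(W)$ denotes the set of invertible measure-preserving transformations of $W$, equipped with the weak topology ($T_n \to T$ iff $\mu(T_nE \triangle TE) \to 0$ for every measurable $E$). For $T_0 \in \mathcal{G}(X)$, $\mathcal{G}_{T_0} \subset \mathcal{G}(Z)$ is the set of extensions of $T_0$ through the projection $Z\to X$, i.e. transformations of the form $T(x,y) = (T_0x, T_x y)$ with $T_x \in \mathcal{G}(Y)$; it carries the (relative) weak topology. $T_0$ is also identified with $T_0 \times \mathrm{id}_Y$ on $Z$. A transformation $T$ on a space $W$ is rigid if there is a subsequence $n_k$ with $T^{n_k} \to \mathrm{id}_W$ strongly (as Koopman operators on $L^2(W)$); $\mathcal{R}(Z)$ is the set of rigid transformations of $Z$. $\mathbb{E}(\cdot|X)$ denotes conditional expectation onto the $\sigma$-algebra of sets $B\times Y$ (viewed as functions on $X$). $L^2(Z|X)$ is the space of $f \in L^2(Z)$ with $\|f\|_{L^2(Z|X)} := \mathbb{E}(|f|^2|X)^{1/2} \in L^\infty(X)$. $T\in\mathcal{G}_{T_0}$ is a (strongly) mixing extension of $T_0$ if for all $f,g \in L^2(Z|X)$, $\lim_{n\to\infty}\|\mathbb{E}(T^n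 f\cdot \overline{g}|X) - T_0^n\mathbb{E}(f|X)\,\mathbb{E}(\overline{g}|X)\|_{L^2(X)} = 0$, where $T^n f = f\circ T^n$. $\mathcal{S}_{T_0}$ denotes the set of strongly mixing extensions of $T_0$. *)

(* Defs.v *)
From HB Require Import structures.
From mathcomp Require Import all_boot all_order all_algebra.
From mathcomp Require Import all_classical all_reals all_analysis.
Set Implicit Arguments. Unset Strict Implicit. Unset Printing Implicit Defensive.
Import Order.TTheory GRing.Theory Num.Theory.
Import numFieldNormedType.Exports.
Local Open Scope classical_set_scope.
Local Open Scope ring_scope.

(* The spaces.  X = Y = [0,1] with Lebesgue measure, realised inside  *)
(* R (Borel sets) with Lebesgue measure restricted to [0,1];          *)
(* Z = X x Y realised inside R * R with the product measure           *)
(* restricted to [0,1] x [0,1].                                       *)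

Definition Iu (R : realType) : set R := `[0%R, 1%R]%classic.

Definition mI (R : realType) (A : set R) : \bar R :=
  lebesgue_measure (A `&` (@Iu R)).

Definition mZ (R : realType) (A : set (R * R)) : \bar R :=
  ((@lebesgue_measure R) \x (@lebesgue_measure R)) (A `&` ((@Iu R) `*` (@Iu R))).

Definition mnull d (W : measurableType d) (R : realType)
  (mu : set W -> \bar R) (N : set W) : Prop :=
  exists M, measurable M /\ mu M = 0%E /\ N `<=` M.

Definition mpreserving d (W : measurableType d) (R : realType)
  (mu : set W -> \bar R) (T : W -> W) : Prop :=
  measurable_fun setT T /\
  forall A, measurable A -> mu (T @^-1` A) = mu A.

Definition ae_inverse d (W : measurableType d) (R : realType)
  (mu : set W -> \bar R) (T S : W -> W) : Prop :=
  mpreserving mu S /\ mnull mu [set w | S (T w) <> w \/ T (S w) <> w].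

Definition inG d (W : measurableType d) (R : realType)
  (mu : set W -> \bar R) (T : W -> W) : Prop :=
  mpreserving mu T /\ exists S, ae_inverse mu T S.

(* mu(T E) is read through an inverse S of T: T E = S^{-1} E mod 0.   *)

(* basic neighbourhood: mu(T' E triangle T E) < eps for E = Es 0, ..., Es (k-1) *)
Definition wnbhd d (W : measurableType d) (R : realType)
  (mu : set W -> \bar R) (T : W -> W) (k : nat) (Es : nat -> set W) (eps : R)
  : set (W -> W) :=
  [set T' | forall i, (i < k)%N -> let E := Es i in
     exists S S', ae_inverse mu T S /\ ae_inverse mu T' S' /\
       (mu (((S' @^-1` E) `\` (S @^-1` E)) `|` ((S @^-1` E) `\` (S' @^-1` E))) < eps%:E)%E].

Definition wopen d (W : measurableType d) (R : realType)
  (mu : set W -> \bar R) (G U : set (W -> W)) : Prop :=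
  U `<=` G /\
  forall T, U T -> exists (k : nat) (Es : nat -> set W) (eps : R),
    (forall i, (i < k)%N -> measurable (Es i)) /\ (0 < eps)%R /\
    G `&` wnbhd mu T k Es eps `<=` U.

Definition wclosure d (W : measurableType d) (R : realType)
  (mu : set W -> \bar R) (G A : set (W -> W)) : set (W -> W) :=
  [set T | G T /\ forall U, wopen mu G U -> U T -> U `&` A !=set0].

Definition winterior d (W : measurableType d) (R : realType)
  (mu : set W -> \bar R) (G A : set (W -> W)) : set (W -> W) :=
  [set T | exists U, wopen mu G U /\ U T /\ U `<=` A].

Definition wdense d (W : measurableType d) (R : realType)
  (mu : set W -> \bar R) (G A : set (W -> W)) : Prop :=
  G `<=` wclosure mu G (A `&` G).

Definition wnowhere_dense d (W : measurableType d) (R : realType)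
  (mu : set W -> \bar R) (G A : set (W -> W)) : Prop :=
  winterior mu G (wclosure mu G (A `&` G)) = set0.

Definition wfirst_category d (W : measurableType d) (R : realType)
  (mu : set W -> \bar R) (G A : set (W -> W)) : Prop :=
  A `<=` G /\
  exists N : nat -> set (W -> W),
    (forall k, wnowhere_dense mu G (N k)) /\ A `<=` \bigcup_k N k.

Definition GT0 (R : realType) (T0 : R -> R) : set (R * R -> R * R) :=
  [set T | inG (@mZ R) T /\
     exists Tx : R -> R -> R,
       (forall x y, T (x, y) = (T0 x, Tx x y)) /\
       (forall x, inG (@mI R) (Tx x))].

(* Complex-valued functions are represented by pairs (f1, f2) of      *)
(* real functions, f = f1 + i f2.                                     *)

Definition intZ (R : realType) (h : R * R -> R) : \bar R :=
  (\int[(@lebesgue_measure R) \x (@lebesgue_measure R)]_(z in (@Iu R) `*` (@Iu R))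
      (h z)%:E)%E.

Definition intX (R : realType) (h : R -> R) : \bar R :=
  (\int[@lebesgue_measure R]_(x in (@Iu R)) (h x)%:E)%E.

Definition L2Z (R : realType) (f1 f2 : R * R -> R) : Prop :=
  measurable_fun setT f1 /\ measurable_fun setT f2 /\
  (intZ (fun z => (f1 z ^+ 2 + f2 z ^+ 2)%R) < +oo)%E.

(* E(h | X) for real h, as a function on X: x |-> int_Y h(x,y) dnu(y) *)
Definition condX (R : realType) (h : R * R -> R) (x : R) : R :=
  Rintegral (@lebesgue_measure R) ((@Iu R)) (fun y => h (x, y)).

Definition L2ZX (R : realType) (f1 f2 : R * R -> R) : Prop :=
  measurable_fun setT f1 /\ measurable_fun setT f2 /\
  exists C : R, {ae @lebesgue_measure R, forall x, (@Iu R) x ->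
    (\int[@lebesgue_measure R]_(y in (@Iu R))
        (f1 (x, y) ^+ 2 + f2 (x, y) ^+ 2)%R%:E <= C%:E)%E}.

(* T^{n_k} -> id strongly on L^2(Z) (Koopman operators f |-> f o T^n) *)
Definition rigid (R : realType) (T : R * R -> R * R) : Prop :=
  exists n : nat -> nat, (forall k, (n k < n k.+1)%N) /\
    forall f1 f2, L2Z f1 f2 ->
      (fun k => intZ (fun z => (f1 (iter (n k) T z) - f1 z) ^+ 2 +
                              (f2 (iter (n k) T z) - f2 z) ^+ 2))
        @ \oo --> 0%E.

Definition RZ (R : realType) : set (R * R -> R * R) :=
  [set T | inG (@mZ R) T /\ rigid T].

(* || E(T^n f . conj g | X) - T0^n E(f|X) . E(conj g|X) ||_{L^2(X)}^2, *)
(* with f = f1 + i f2, g = g1 + i g2.                                  *)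
Definition mix_defect (R : realType) (T0 : R -> R) (T : R * R -> R * R)
  (f1 f2 g1 g2 : R * R -> R) (n : nat) : \bar R :=
  let F1 := fun z => f1 (iter n T z) in
  let F2 := fun z => f2 (iter n T z) in
  (* T^n f . conj g = P1 + i P2 *)
  let P1 := fun z => F1 z * g1 z + F2 z * g2 z in
  let P2 := fun z => F2 z * g1 z - F1 z * g2 z in
  (* T0^n E(f|X) = a1 + i a2 ;  E(conj g|X) = b1 - i b2 *)
  let a1 := fun x => condX f1 (iter n T0 x) in
  let a2 := fun x => condX f2 (iter n T0 x) in
  let b1 := condX g1 in
  let b2 := condX g2 in
  let D1 := fun x => condX P1 x - (a1 x * b1 x + a2 x * b2 x) in
  let D2 := fun x => condX P2 x - (a2 x * b1 x - a1 x * b2 x) in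
  intX (fun x => D1 x ^+ 2 + D2 x ^+ 2).

Definition mixing_ext (R : realType) (T0 : R -> R) (T : R * R -> R * R) : Prop :=
  forall f1 f2 g1 g2, L2ZX f1 f2 -> L2ZX g1 g2 ->
    (fun n => mix_defect T0 T f1 f2 g1 g2 n) @ \oo --> 0%E.

Definition ST0 (R : realType) (T0 : R -> R) : set (R * R -> R * R) :=
  [set T | GT0 T0 T /\ mixing_ext T0 T].

(* Main.v *)
Require Import Defs.
From HB Require Import structures.
From mathcomp Require Import all_boot all_order all_algebra.
From mathcomp Require Import all_classical all_reals all_analysis.
From mathcomp Require Import measurable_realfun.
From mathcomp Require Import ring lra.
Set Implicit Arguments. Unset Strict Implicit. Unset Printing Implicit Defensive.
Import Order.TTheory GRing.Theory Num.Theory.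
Import numFieldNormedType.Exports.
Local Open Scope classical_set_scope.
Local Open Scope ring_scope.

Section S.
Variable R : realType.
Notation lam := (@lebesgue_measure R).
Notation mZ := (@mZ R).
Notation Q := ((@Iu R) `*` (@Iu R)).

Definition sd (T : Type) (X Y : set T) := (X `\` Y) `|` (Y `\` X).

Lemma mIu : measurable (@Iu R).
Proof. exact: measurable_itv. Qed.

Lemma mQ : measurable Q.
Proof. apply: measurableX; exact: mIu. Qed.

Lemma mZE A : mZ A = (lam \x lam)%E (A `&` Q).
Proof. by []. Qed.

Lemma mZ_ge0 A : (0 <= mZ A)%E.
Proof. by rewrite mZE; exact: measure_ge0. Qed.

Lemma mZ_le A B : measurable A -> measurable B -> A `<=` B -> (mZ A <= mZ B)%E.
Proof.
move=> mA mB AB; rewrite !mZE; apply: le_measure; rewrite ?inE; try exact: measurableI mQ.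
exact: setSI.
Qed.

Lemma mZ_U2 A B : measurable A -> measurable B -> (mZ (A `|` B) <= mZ A + mZ B)%E.
Proof.
move=> mA mB; rewrite !mZE setIUl; apply: measureU2; exact: measurableI mQ.
Qed.

Lemma mpre (f : R * R -> R * R) C : measurable_fun setT f -> measurable C ->
  measurable (f @^-1` C).
Proof. by move=> mf mC; rewrite -[_ @^-1` _]setTI; exact: mf. Qed.

Lemma msd (X Y : set (R * R)) : measurable X -> measurable Y -> measurable (sd X Y).
Proof. by move=> mX mY; apply: measurableU; apply: measurableD. Qed.

Lemma null_le X Y N : measurable X -> measurable Y -> mnull mZ N ->
  X `<=` Y `|` N -> (mZ X <= mZ Y)%E.
Proof.
move=> mX mY [M [mM [M0 NM]]] XY.
apply: (@le_trans _ _ (mZ (Y `|` M))).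
  apply: mZ_le => //; first exact: measurableU.
  by move=> w /XY [|/NM]; [left|right].
by apply: le_trans (mZ_U2 mY mM) _; rewrite M0 adde0.
Qed.

Lemma step T T' S S' C : mpreserving mZ T -> mpreserving mZ T' ->
  ae_inverse mZ T S -> ae_inverse mZ T' S' -> measurable C ->
  (mZ (sd (T @^-1` C) (T' @^-1` C)) <=
   mZ (sd (S' @^-1` (T @^-1` C)) (S @^-1` (T @^-1` C))))%E.
Proof.
move=> [mT pT] [mT' pT'] [[mS pS] N] [[mS' pS'] N'] mC.
set E := T @^-1` C.
have mE : measurable E by exact: mpre.
have mS'E : measurable (S' @^-1` E) by exact: mpre.
have mSE : measurable (S @^-1` E) by exact: mpre.
apply: (@le_trans _ _ (mZ (T' @^-1` (sd (S' @^-1` E) C)))).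
  apply: (null_le _ _ N').
  - by apply: msd => //; exact: mpre.
  - by apply: mpre => //; exact: msd.
  move=> w Hw; have [Nw|Nw] := pselect (S' (T' w) <> w \/ T' (S' w) <> w); first by right.
  have e : S' (T' w) = w by apply: contrapT => ne; apply: Nw; left.
  left; rewrite /preimage /sd /= e.
  by case: Hw => -[a b]; [left|right].
rewrite pT'; last exact: msd.
apply: (null_le _ _ N); [exact: msd|exact: msd|].
move=> w Hw; have [Nw|Nw] := pselect (S (T w) <> w \/ T (S w) <> w); first by right.
have e : T (S w) = w by apply: contrapT => ne; apply: Nw; right.
left; move: Hw; rewrite /sd /E /preimage /= e.
by case => -[a b]; [left|right].
Qed.

Lemma iter_mp T n : mpreserving mZ T -> mpreserving mZ (iter n T).
Proof.
move=> [mT pT]; elim: n => [|n [mI pI]] /=.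
  by split => //; exact: measurable_id.
split; first exact: measurableT_comp.
move=> A mA; rewrite -(pT A mA) -(pI (T @^-1` A)) //; exact: mpre.
Qed.

Lemma iterS_pre (T : R * R -> R * R) n B :
  iter n.+1 T @^-1` B = T @^-1` (iter n T @^-1` B).
Proof. by apply/seteqP; split => z; rewrite /preimage /= -iterSr. Qed.

Lemma iter_bound T T' B N (eps : R) : mpreserving mZ T -> mpreserving mZ T' ->
  measurable B ->
  (forall j, (j < N)%N -> (mZ (sd (T @^-1` (iter j T @^-1` B))
                                (T' @^-1` (iter j T @^-1` B))) <= eps%:E)%E) ->
  forall n, (n <= N)%N ->
  (mZ (sd (iter n T @^-1` B) (iter n T' @^-1` B)) <= (n%:R * eps)%:E)%E.
Proof.
move=> hT hT' mB hj; elim => [_|n IH nN].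
  rewrite mul0r /sd /= setDv setU0 mZE set0I measure0; exact: lexx.
have [mIT pIT] := iter_mp n hT.
have [mIT' pIT'] := iter_mp n hT'.
have [mT pT] := hT; have [mT' pT'] := hT'.
rewrite !iterS_pre.
set C := iter n T @^-1` B; set C' := iter n T' @^-1` B.
have mC : measurable C by exact: mpre.
have mC' : measurable C' by exact: mpre.
apply: (@le_trans _ _ (mZ (sd (T @^-1` C) (T' @^-1` C)) + mZ (T' @^-1` (sd C C')))%E).
  have m1 : measurable (sd (T @^-1` C) (T' @^-1` C)) by apply: msd; exact: mpre.
  have m2 : measurable (T' @^-1` sd C C') by apply: mpre => //; exact: msd.
  apply: le_trans (mZ_U2 m1 m2).
  apply: mZ_le; [by apply: msd; exact: mpre|exact: measurableU|].
  move=> w; rewrite /sd /preimage /=.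
  by case: (pselect (C (T' w))) => ?; tauto.
rewrite pT'; last exact: msd.
rewrite -nat1r mulrDl mul1r EFinD; apply: leeD.
  by apply: hj.
by apply: IH; apply: ltnW.
Qed.

Definition sec (W : set (R * R)) (x : R) := lam (xsection W x `&` (@Iu R)).

Lemma lamIu : lam (@Iu R) = 1%E.
Proof. by rewrite /Iu lebesgue_measure_itv /= lte_fin ltr01 oppr0 adde0. Qed.

Lemma sec_meas W : measurable W -> measurable_fun [set: R] (sec W).
Proof.
move=> mW.
have -> : sec W = lam \o xsection (W `&` (setT `*` (@Iu R))).
  by apply/funext => x; rewrite /sec /= xsectionI setTX xsection_preimage_snd.
apply: measurable_fun_xsection; apply: measurableI => //.
apply: measurableX => //; exact: mIu.
Qed.

Lemma sec_ge0 W x : (0 <= sec W x)%E.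
Proof. exact: measure_ge0. Qed.

Lemma sec_le1 W x : measurable W -> (sec W x <= 1)%E.
Proof.
move=> mW; rewrite -lamIu; apply: le_measure.
- rewrite inE; apply: measurableI; [exact: measurable_xsection|exact: mIu].
- rewrite inE; exact: mIu.
- exact: subIsetr.
Qed.

Lemma mZ_sec W : measurable W -> mZ W = (\int[lam]_(x in (@Iu R)) sec W x)%E.
Proof.
move=> mW; rewrite mZE /product_measure1 /= [RHS]integral_mkcond.
apply: eq_integral => x _; rewrite /patch /sec xsectionI /=.
case: ifPn => xI; first by rewrite in_xsectionX.
by rewrite notin_xsectionX // setI0 measure0.
Qed.

Definition Aset : set (R * R) := [set z | z.2 < 2^-1].
Definition hh (z : R * R) : R := 1 - 2 * \1_(~` Aset) z.

Lemma mAset : measurable Aset.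
Proof.
have -> : Aset = setT `*` [set` `]-oo, 2^-1[%R].
  apply/seteqP; split => -[x y] /=.
    by move=> h; split => //; rewrite in_itv /= h.
  by case=> _; rewrite in_itv.
apply: measurableX => //.
Qed.

Lemma hh_meas : measurable_fun setT hh.
Proof.
apply: measurable_funB; first exact: measurable_cst.
apply: measurable_funM; first exact: measurable_cst.
apply: measurable_indic; apply: measurableC; exact: mAset.
Qed.

Lemma hh_prod (f : R * R -> R * R) z :
  hh (f z) * hh z = 1 - 2 * \1_(sd (f @^-1` Aset) Aset) z.
Proof.
rewrite /hh !indicE.
have [H1|H1] := pselect (Aset (f z)); have [H2|H2] := pselect (Aset z).
- rewrite !in_setC (mem_set H1) (mem_set H2) /sd in_setU !in_setD.
  rewrite (mem_set (_ : (f @^-1` Aset) z)) // (mem_set H2) /=.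
  by ring.
- rewrite !in_setC (mem_set H1) (memNset H2) /sd in_setU !in_setD.
  rewrite (mem_set (_ : (f @^-1` Aset) z)) // (memNset H2) /=.
  by ring.
- rewrite !in_setC (memNset H1) (mem_set H2) /sd in_setU !in_setD.
  rewrite (memNset (_ : ~ (f @^-1` Aset) z)) // (mem_set H2) /=.
  by ring.
- rewrite !in_setC (memNset H1) (memNset H2) /sd in_setU !in_setD.
  rewrite (memNset (_ : ~ (f @^-1` Aset) z)) // (memNset H2) /=.
  by ring.
Qed.

Lemma bnd_int (f : R -> R) (c : R) : measurable_fun (@Iu R) f ->
  (forall x, `|f x| <= c) -> lam.-integrable (@Iu R) (EFin \o f).
Proof.
move=> mf fc; apply: measurable_bounded_integrable => //.
- exact: mIu.
- by change (lam (@Iu R) < +oo)%E; rewrite lamIu ltry.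
exists c; split; first exact: num_real.
move=> M cM x _; apply: le_trans (fc x) _; exact: ltW.
Qed.

Lemma G1 (V : set R) : measurable V ->
  Rintegral lam (@Iu R) (fun y => 1 - 2 * \1_V y) = 1 - 2 * fine (lam (V `&` (@Iu R))).
Proof.
move=> mV.
have iV : lam.-integrable (@Iu R) (EFin \o (\1_V : R -> R)).
  apply: (@bnd_int _ 1); first exact: measurable_indic.
  by move=> x; rewrite indicE; case: (_ \in _); rewrite ?normr1 ?normr0.
rewrite RintegralB //; first last.
- refine (integrableZl _ 2 iV); exact: measurable_itv.
- apply: (@bnd_int _ 1); [exact: measurable_cst | by move=> x; rewrite normr1].
- exact: mIu.
rewrite Rintegral_cst; last exact: mIu.
rewrite [X in 1 * X](_ : _ = 1%R); last exact: (congr1 fine lamIu).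
rewrite mul1r RintegralZl //; last exact: measurable_itv.
congr (_ - _ * _); rewrite /Rintegral; congr fine. apply: integral_indic; [exact: measurable_itv|exact: mV].
Qed.

Definition Wn T n := sd (iter n T @^-1` Aset) Aset.
Definition uu T n x := 1 - 2 * fine (sec (Wn T n) x).
Definition DD T n := (\int[lam]_(x in (@Iu R)) ((uu T n x)^+2)%:E)%E.

Lemma mWn T n : measurable_fun setT (iter n T) -> measurable (Wn T n).
Proof. by move=> mT; apply: msd; [apply: mpre => //|]; exact: mAset. Qed.

Lemma condX_W T n x : measurable_fun setT (iter n T) ->
  condX (fun z => hh (iter n T z) * hh z) x = uu T n x.
Proof.
move=> mT; rewrite /condX.
have -> : (fun y => hh (iter n T (x, y)) * hh (x, y)) =
          (fun y => 1 - 2 * \1_(xsection (Wn T n) x) y).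
  by apply/funext => y; rewrite hh_prod !indicE mem_xsection.
rewrite G1 //; exact: measurable_xsection (mWn mT).
Qed.

Lemma condX0 x : condX (fun _ : R * R => 0) x = 0.
Proof. by rewrite /condX Rintegral_cst ?mul0r //; exact: measurable_itv. Qed.

Lemma condX_hh x : condX hh x = 0.
Proof.
rewrite /condX.
have -> : (fun y => hh (x, y)) = (fun y => 1 - 2 * \1_(xsection (~` Aset) x) y).
  by apply/funext => y; rewrite /hh !indicE mem_xsection.
rewrite G1; last by apply: measurable_xsection; apply: measurableC; exact: mAset.
have -> : xsection (~` Aset) x `&` (@Iu R) = [set` `[2^-1, 1]%R].
  apply/seteqP; split => y /=.
    case=> /xsectionP /= h1; rewrite /Iu /= !in_itv /= => /andP[_ ->].
    by rewrite andbT leNgt; apply/negP.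
  rewrite !in_itv /= => /andP[h1 h2]; split.
    by apply/xsectionP => /=; rewrite /Aset /= ltNge h1.
  rewrite /Iu /= in_itv /= h2 andbT; apply: le_trans h1; rewrite invr_ge0; exact: ler0n.
rewrite lebesgue_measure_itv /= lte_fin.
have h : (2^-1 : R) < 1 by rewrite invf_lt1 // ltr1n.
rewrite h /=; lra.
Qed.

Lemma mix_eq (T0 : R -> R) T n : measurable_fun setT (iter n T) ->
  mix_defect T0 T hh (fun _ => 0) hh (fun _ => 0) n = DD T n.
Proof.
move=> mT; rewrite /mix_defect /intX /DD.
apply: eq_integral => x _; rewrite !condX_hh !condX0.
have -> : (fun z : R * R => hh (iter n T z) * hh z + 0 * 0) =
          (fun z => hh (iter n T z) * hh z) by apply/funext => z; rewrite mulr0 addr0.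
have -> : (fun z : R * R => 0 * hh z - hh (iter n T z) * 0) = (fun _ => 0).
  by apply/funext => z; rewrite mulr0 mul0r subr0.
rewrite condX0 condX_W //.
congr (_%:E); ring.
Qed.

Lemma int_le (f g : R -> R) : measurable_fun setT f -> measurable_fun setT g ->
  (forall x, (@Iu R) x -> 0 <= f x) -> (forall x, (@Iu R) x -> f x <= g x) ->
  (\int[lam]_(x in (@Iu R)) (f x)%:E <= \int[lam]_(x in (@Iu R)) (g x)%:E)%E.
Proof.
move=> mf mg f0 fg; apply: ge0_le_integral.
- exact: measurable_itv.
- by move=> x /f0; rewrite lee_fin.
- by apply/measurable_EFinP; exact: measurable_funS mf.
- by apply/measurable_EFinP; exact: measurable_funS mg.
- by move=> x /fg; rewrite lee_fin.
Qed.

Lemma int_add (f g : R -> R) : measurable_fun setT f -> measurable_fun setT g ->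
  (forall x, (@Iu R) x -> 0 <= f x) -> (forall x, (@Iu R) x -> 0 <= g x) ->
  (\int[lam]_(x in (@Iu R)) (f x + g x)%:E =
   \int[lam]_(x in (@Iu R)) (f x)%:E + \int[lam]_(x in (@Iu R)) (g x)%:E)%E.
Proof.
move=> mf mg f0 g0.
rewrite -(ge0_integralD lam (D:=@Iu R)); first by apply: eq_integral => x _; rewrite EFinD.
all: first [exact: measurable_itv | (by move=> x /f0; rewrite lee_fin) |
  (by move=> x /g0; rewrite lee_fin) |
  (by apply/measurable_EFinP; exact: measurable_funS mf) |
  (by apply/measurable_EFinP; exact: measurable_funS mg)].
Qed.

Lemma int_scale (f : R -> R) (k : R) : measurable_fun setT f -> 0 <= k ->
  (forall x, (@Iu R) x -> 0 <= f x) ->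
  (\int[lam]_(x in (@Iu R)) (k * f x)%:E = k%:E * \int[lam]_(x in (@Iu R)) (f x)%:E)%E.
Proof.
move=> mf k0 f0.
rewrite -(ge0_integralZl_EFin lam (D:=@Iu R)) //.
all: first [exact: measurable_itv | (by move=> x /f0; rewrite lee_fin) |
  (by apply/measurable_EFinP; exact: measurable_funS mf)].
Qed.

Lemma secE W x : measurable W -> sec W x = (fine (sec W x))%:E.
Proof.
move=> mW; rewrite fineK // ge0_fin_numE; last exact: sec_ge0.
exact: le_lt_trans (sec_le1 x mW) (ltry _).
Qed.

Lemma fsec01 W x : measurable W -> 0 <= fine (sec W x) <= 1.
Proof.
move=> mW; rewrite -!lee_fin -secE //; apply/andP; split; first exact: sec_ge0.
exact: sec_le1.
Qed.

Lemma meas_fsec W : measurable W -> measurable_fun setT (fun x => fine (sec W x)).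
Proof.
move=> mW; apply: (measurableT_comp (f := fine)); last exact: sec_meas.
exact: fine_measurable.
Qed.

Lemma int_fsec W : measurable W ->
  (\int[lam]_(x in (@Iu R)) (fine (sec W x))%:E = mZ W)%E.
Proof.
move=> mW; rewrite mZ_sec //; apply: eq_integral => x _; by rewrite -secE.
Qed.

Lemma meas_uu2 T n : measurable_fun setT (iter n T) ->
  measurable_fun setT (fun x => uu T n x ^+ 2).
Proof.
move=> mT; apply: measurable_funX; apply: measurable_funB; first exact: measurable_cst.
apply: measurable_funM; first exact: measurable_cst.
exact: meas_fsec (mWn mT).
Qed.

Lemma sec_sub X Y Z x : measurable X -> measurable Y -> measurable Z ->
  X `<=` Y `|` Z -> (sec X x <= sec Y x + sec Z x)%E.
Proof.
move=> mX mY mZ XYZ; rewrite /sec.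
have mI : forall W : set (R * R), measurable W ->
    measurable (xsection W x `&` (@Iu R)).
  by move=> W mW; apply: measurableI; [exact: measurable_xsection|exact: measurable_itv].
apply: (le_trans _ (measureU2 lam (mI _ mY) (mI _ mZ))).
apply: le_measure; rewrite ?inE.
- exact: mI.
- by apply: measurableU; exact: mI.
move=> y [/xsectionP /XYZ [h|h] Iy]; [left|right]; split => //; exact/xsectionP.
Qed.

Lemma int1 : (\int[lam]_(x in (@Iu R)) (1%R)%:E = 1)%E.
Proof.
rewrite (integral_cst lam (D := @Iu R)); last exact: measurable_itv.
rewrite mul1e; exact: lamIu.
Qed.

Lemma DD_cont T T' n : measurable_fun setT (iter n T) -> measurable_fun setT (iter n T') ->
  (DD T n <= DD T' n +
     4%:E * mZ (sd (iter n T @^-1` Aset) (iter n T' @^-1` Aset)))%E.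
Proof.
move=> mT mT'.
set D := sd (iter n T @^-1` Aset) (iter n T' @^-1` Aset).
have mD : measurable D by apply: msd; apply: mpre => //; exact: mAset.
have mW := mWn mT; have mW' := mWn mT'.
rewrite -int_fsec // -int_scale //; last first.
- by move=> x _; case/andP: (fsec01 x mD).
- exact: meas_fsec.
rewrite /DD -int_add //; first last.
- by move=> x _; apply: mulr_ge0; [exact: ler0n|case/andP: (fsec01 x mD)].
- by move=> x _; exact: sqr_ge0.
- apply: measurable_funM; [exact: measurable_cst|exact: meas_fsec].
- exact: meas_uu2.
apply: int_le.
- exact: meas_uu2.
- apply: measurable_funD; first exact: meas_uu2.
  apply: measurable_funM; [exact: measurable_cst|exact: meas_fsec].
- by move=> x _; exact: sqr_ge0.
move=> x _.
have h1 : (sec (Wn T n) x <= sec (Wn T' n) x + sec D x)%E.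
  apply: sec_sub => //; move=> z; rewrite /Wn /D /sd /preimage /=.
  by case: (pselect (Aset (iter n T' z))) => ?; tauto.
have h2 : (sec (Wn T' n) x <= sec (Wn T n) x + sec D x)%E.
  apply: sec_sub => //; move=> z; rewrite /Wn /D /sd /preimage /=.
  by case: (pselect (Aset (iter n T z))) => ?; tauto.
rewrite (secE _ mW) (secE _ mW') (secE _ mD) -EFinD lee_fin in h1.
rewrite (secE _ mW) (secE _ mW') (secE _ mD) -EFinD lee_fin in h2.
have := fsec01 x mW; have := fsec01 x mW'; have := fsec01 x mD.
rewrite /uu.
move: h1 h2; set a := fine (sec (Wn T n) x); set b := fine (sec (Wn T' n) x).
set v := fine (sec D x) => h1 h2 /andP[v0 v1] /andP[b0 b1] /andP[a0 a1].
nra.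
Qed.

Lemma DD_le1 T n : measurable_fun setT (iter n T) -> (DD T n <= 1)%E.
Proof.
move=> mT; rewrite -int1 /DD; apply: int_le.
- exact: meas_uu2.
- exact: measurable_cst.
- by move=> x _; exact: sqr_ge0.
move=> x _; have /andP[a0 a1] := fsec01 x (mWn mT); rewrite /uu; nra.
Qed.

Lemma DD_ge0 T n : (0 <= DD T n)%E.
Proof. by apply: integral_ge0 => x _; rewrite lee_fin; exact: sqr_ge0. Qed.

Lemma hh_sq z : hh z ^+ 2 = 1.
Proof. by rewrite /hh indicE; case: (_ \in _) => /=; ring. Qed.

Lemma g_eq (f : R * R -> R * R) z :
  (hh (f z) - hh z) ^+ 2 + (0 - 0) ^+ 2 = 4 * \1_(sd (f @^-1` Aset) Aset) z.
Proof.
have h := hh_prod f z; have h1 := hh_sq (f z); have h2 := hh_sq z.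
rewrite sqrrB h1 h2 h; ring.
Qed.

Lemma intZ_W T n : measurable_fun setT (iter n T) ->
  intZ (fun z => (hh (iter n T z) - hh z) ^+ 2 + (0 - 0) ^+ 2) =
  (4%:E * mZ (Wn T n))%E.
Proof.
move=> mT; have mW := mWn mT; rewrite /intZ.
transitivity (\int[(lam \x lam)%E]_(z in Q) (4%:E * (\1_(Wn T n) z)%:E))%E.
  by apply: eq_integral => z _; rewrite g_eq EFinM.
have -> : (\int[(lam \x lam)%E]_(z in Q) (4%:E * (\1_(Wn T n) z)%:E) =
    4%:E * \int[(lam \x lam)%E]_(z in Q) (\1_(Wn T n) z)%:E)%E.
  apply: ge0_integralZl_EFin.
  - exact: mQ.
  - by move=> z _; rewrite lee_fin; rewrite indicE; case: (_ \in _).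
  - by apply/measurable_EFinP; exact: measurable_indic.
  - exact: ler0n.
congr (_ * _)%E; rewrite mZE; apply: integral_indic => //; exact: mQ.
Qed.

Lemma DD_rigid T n : measurable_fun setT (iter n T) ->
  (1 <= DD T n + intZ (fun z => ((hh (iter n T z) - hh z) ^+ 2 + (0 - 0) ^+ 2)%R))%E.
Proof.
move=> mT; have mW := mWn mT.
rewrite intZ_W // -int_fsec // -int_scale //; first last.
- by move=> x _; case/andP: (fsec01 x mW).
- exact: meas_fsec.
rewrite /DD -int_add //; first last.
- by move=> x _; apply: mulr_ge0; [exact: ler0n|case/andP: (fsec01 x mW)].
- by move=> x _; exact: sqr_ge0.
- apply: measurable_funM; [exact: measurable_cst|exact: meas_fsec].
- exact: meas_uu2.
rewrite -int1; apply: int_le.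
- exact: measurable_cst.
- apply: measurable_funD; first exact: meas_uu2.
  apply: measurable_funM; [exact: measurable_cst|exact: meas_fsec].
- by move=> x _; exact: ler01.
move=> x _; have /andP[a0 a1] := fsec01 x mW; rewrite /uu; nra.
Qed.

Lemma ev_lt (u : nat -> \bar R) (c : R) : u @ \oo --> 0%E -> 0 < c ->
  exists N, forall k, (N <= k)%N -> (u k < c%:E)%E.
Proof.
move=> /fine_cvgP [hf hc] c0.
have h2 := cvgr_lt 0 hc c c0.
have : \forall k \near \oo, (u k \is a fin_num) /\ (fine (u k) < c).
  near=> k; split; [near: k; exact: hf|near: k; exact: h2].
move=> [N _ hN]; exists N => k Nk; have [f l] := hN k Nk.
by rewrite -(fineK f) lte_fin.
Unshelve. all: by end_near.
Qed.

Lemma inc_ge (s : nat -> nat) : (forall k, (s k < s k.+1)%N) -> forall k, (k <= s k)%N.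
Proof.
move=> hs; elim => [|k IH] //; apply: leq_ltn_trans IH _; exact: hs.
Qed.

Lemma DD_fin T n : measurable_fun setT (iter n T) -> DD T n = (fine (DD T n))%:E.
Proof.
move=> mT; rewrite fineK // ge0_fin_numE; last exact: DD_ge0.
exact: le_lt_trans (DD_le1 mT) (ltry _).
Qed.

Lemma DD_open T n (c : R) : inG mZ T -> (c%:E < DD T n)%E ->
  exists (k : nat) (Es : nat -> set (R * R)) (eps : R),
   (forall i, (i < k)%N -> measurable (Es i)) /\ 0 < eps /\
   forall T', inG mZ T' -> wnbhd mZ T k Es eps T' -> (c%:E < DD T' n)%E.
Proof.
move=> [hT _] cD.
have mIT : measurable_fun setT (iter n T) by case: (iter_mp n hT).
set r := fine (DD T n).
have rc : c < r by rewrite -lte_fin /r -DD_fin.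
set eps := (r - c) / (4 * n%:R + 4).
have h4 : 0 < 4 * n%:R + 4 :> R.
  by apply: ltr_wpDl; [apply: mulr_ge0; [exact: ler0n|exact: ler0n]|exact: ltr0n].
have eps0 : 0 < eps by apply: divr_gt0 => //; rewrite subr_gt0.
have epsE : eps * (4 * n%:R + 4) = r - c by rewrite /eps mulfVK // gt_eqF.
exists n, (fun j => T @^-1` (iter j T @^-1` Aset)), eps; split.
  move=> i _; apply: mpre; first by case: hT.
  apply: mpre; [by case: (iter_mp i hT)|exact: mAset].
split => // T' [hT' _] nb.
have mIT' : measurable_fun setT (iter n T') by case: (iter_mp n hT').
have hb : (mZ (sd (iter n T @^-1` Aset) (iter n T' @^-1` Aset)) <= (n%:R * eps)%:E)%E.
  apply: (@iter_bound T T' Aset n eps hT hT' mAset) => // j jn.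
  have [S [S' [iS [iS' lt]]]] := nb j jn.
  apply: le_trans (ltW lt).
  apply: (step hT hT' iS iS'); apply: mpre; [by case: (iter_mp j hT)|exact: mAset].
have := DD_cont mIT mIT'.
rewrite (DD_fin mIT) (DD_fin mIT') -/r => h.
move: h; set m := mZ _ => h.
have m0 : (0 <= m)%E by exact: mZ_ge0.
have mfin : m = (fine m)%:E.
  rewrite fineK // ge0_fin_numE //; exact: le_lt_trans hb (ltry _).
rewrite mfin -EFinM -EFinD lee_fin in h.
rewrite -/m mfin lee_fin in hb.
rewrite lte_fin.
have fm0 : 0 <= fine m by rewrite -lee_fin -mfin.
have n0 : 0 <= n%:R :> R by exact: ler0n.
nra.
Qed.

Lemma L2Z_hh : L2Z hh (fun _ => 0).
Proof.
split; first exact: hh_meas.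
split; first exact: measurable_cst.
rewrite /intZ.
have -> : (\int[(lam \x lam)%E]_(z in Q) ((hh z ^+ 2 + (0:R) ^+ 2)%:E) =
    \int[(lam \x lam)%E]_(z in Q) (cst 1%E z))%E.
  by apply: eq_integral => z _; rewrite hh_sq expr0n /= addr0.
rewrite integral_cst; last exact: mQ.
have pQ : ((lam \x lam) Q = 1)%E.
  rewrite product_measure1E; [|exact: mIu|exact: mIu].
  rewrite [X in (X * _)%E](_ : _ = 1%E); last exact: lamIu.
  rewrite [X in (_ * X)%E](_ : _ = 1%E); last exact: lamIu.
  by rewrite mul1e.
rewrite mul1e; apply: (@le_lt_trans _ _ 1%E); last exact: ltry.
rewrite le_eqVlt; apply/orP; left; apply/eqP; exact: pQ.
Qed.

Lemma L2ZX_hh : L2ZX hh (fun _ => 0).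
Proof.
split; first exact: hh_meas.
split; first exact: measurable_cst.
exists 1; apply: aeW => x _.
rewrite -[X in (_ <= X)%E]int1 le_eqVlt; apply/orP; left; apply/eqP/eq_integral => y _.
by rewrite hh_sq expr0n /= addr0.
Qed.

Lemma intZ_ge0 (g : R * R -> R) : (forall z, 0 <= g z) -> (0 <= intZ g)%E.
Proof. by move=> g0; apply: integral_ge0 => z _; rewrite lee_fin. Qed.

Lemma main (T0 : R -> R) :
  wdense mZ (GT0 T0) (@RZ R `&` GT0 T0) -> wfirst_category mZ (GT0 T0) (ST0 T0).
Proof.
move=> hd; split; first by move=> T [].
pose N K := [set T | GT0 T0 T /\ forall n, (K <= n)%N -> (DD T n <= (2^-1)%:E)%E].
exists N; split; last first.
  move=> T [GT mix].
  have mI : forall n, measurable_fun setT (iter n T).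
    by move=> n; case: (iter_mp n GT.1.1).
  have := mix _ _ _ _ L2ZX_hh L2ZX_hh.
  have -> : (fun n => mix_defect T0 T hh (fun _ => 0) hh (fun _ => 0) n) =
            (fun n => DD T n) by apply/funext => n; rewrite mix_eq.
  move=> /(@ev_lt _ (2^-1)) [|K hK]; first by rewrite invr_gt0 ltr0n.
  exists K => //; split => // n Kn; exact: ltW (hK n Kn).
move=> K; apply/seteqP; split => // T [U [oU [UT Ucl]]].
have GT := oU.1 T UT.
have [_ hcl] := hd T GT.
have [R' [UR' [[[iR' rR'] GR'] _]]] := hcl U oU UT.
have [_ cl] := Ucl R' UR'.
have [s [sinc hs]] := rR'.
have := hs _ _ L2Z_hh => /(@ev_lt _ (4^-1)) [|N0 hN0]; first by rewrite invr_gt0 ltr0n.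
set n0 := s (maxn K N0).
have Kn0 : (K <= n0)%N := leq_trans (leq_maxl K N0) (inc_ge sinc _).
have hI : (intZ (fun z => ((hh (iter n0 R' z) - hh z) ^+ 2 + (0 - 0) ^+ 2)%R)
            < (4^-1)%:E)%E := hN0 (maxn K N0) (leq_maxr _ _).
have mI0 : measurable_fun setT (iter n0 R') by case: (iter_mp n0 iR'.1).
have hr := DD_rigid mI0.
have DDgt : ((2^-1)%:E < DD R' n0)%E.
  move: hI hr; set I := intZ _ => hI hr.
  have I0 : (0 <= I)%E by apply: intZ_ge0 => z; apply: addr_ge0; exact: sqr_ge0.
  have Ifin : I = (fine I)%:E.
    rewrite fineK // ge0_fin_numE //; exact: lt_trans hI (ltry _).
  rewrite (DD_fin mI0) Ifin -EFinD lee_fin in hr.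
  rewrite Ifin lte_fin in hI.
  rewrite (DD_fin mI0) lte_fin.
  have h4 : (4^-1 : R) = 2^-1 / 2 by rewrite -invfM; congr (_^-1); rewrite -natrM.
  Timeout 20 lra.
pose V := [set T' | GT0 T0 T' /\ ((2^-1)%:E < DD T' n0)%E].
have oV : Defs.wopen mZ (GT0 T0) V.
  split; first by move=> T' [].
  move=> T' [GT' hT'].
  have [k [Es [eps [mEs [e0 hnb]]]]] := DD_open GT'.1 hT'.
  exists k, Es, eps; split => //; split => // T'' [GT'' nb]; split => //.
  exact: hnb GT''.1 nb.
have [T1 [[_ h1] [[_ h2] _]]] := cl V oV (conj GR' DDgt).
have := h2 n0 Kn0; move/(lt_le_trans h1); by rewrite ltxx.
Qed.
End S.

Theorem lemma3p2 (R : realType) (T0 : R -> R) :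
  inG (@mI R) T0 ->
  wdense (@mZ R) (GT0 T0) (@RZ R `&` GT0 T0) ->
  wfirst_category (@mZ R) (GT0 T0) (ST0 T0).
Proof. by move=> _; exact: main. Qed.
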